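(* Let $R$ be a rational map of degree $2$ having two attracting fixed points and one repelling fixed point. Then: (i) If the multipliers of the two attracting fixed points are equal, say to $\lambda$, then $R$ is conjugate (by a Möbius map) to $N_{h,p}$ with $h=1-\lambda$ and $p(z)=z^2-1$. (ii) If one of the attracting fixed points is superattracting and the multiplier of the other attracting fixed point is $\frac{n}{m}$, where $m\in\mathbb{N}$ and $n\in\mathbb{N}\setminus\{0\}$, then $R$ is conjugate to $N_{h,p}$ with $h=m-n$ and $p(z)=(z-1)^{m-n}(z+1)^m$. (iii) If the ratio of the residue fixed point indices of $R$ at the two attracting fixed points is $\frac{k}{m}$ with $k,m\in\mathbb{N}$, then there exists $h\in\mathbb{C}\setminus\{0\}$ such that $R$ is conjugate to $N_{h,p}$ with $p(z)=(z-1)^k(z+1)^m$.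
   Context: For a polynomial $p$ and $h\in\mathbb{C}$, $N_{h,p}(z)=z-h\,\frac{p(z)}{p'(z)}$. The residue fixed point index of $R$ at a fixed point $z_0$ is $\iota(R,z_0)=\frac{1}{2\pi i}\oint_\gamma\frac{dz}{z-R(z)}$ for a small positively oriented loop $\gamma$ around $z_0$ enclosing no other fixed point; if the multiplier $\lambda\neq 1$, then $\iota(R,z_0)=\frac{1}{1-\lambda}$. *)

(* Defs.v *)
From HB Require Import structures.
From mathcomp Require Import all_boot all_order all_algebra.
From mathcomp Require Import complex.
From mathcomp Require Import Rstruct.
Set Implicit Arguments. Unset Strict Implicit. Unset Printing Implicit Defensive.
Import Order.TTheory GRing.Theory Num.Theory ComplexField.
Local Open Scope ring_scope.

Notation CC := (Rdefinitions.R[i]).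

Section RatMap.
Variable C : fieldType.

(* Points of the Riemann sphere: Some z is the finite point z, None is oo. *)
Notation sphere := (option C).

(* A rational function is given by a pair (P, Q) of polynomials, Q <> 0,
   representing P/Q; rnum/rden give the reduced (coprime) form. *)
Definition rnum (P Q : {poly C}) : {poly C} := P %/ gcdp P Q.
Definition rden (P Q : {poly C}) : {poly C} := Q %/ gcdp P Q.

Definition rdeg (P Q : {poly C}) : nat :=
  (maxn (size (rnum P Q)) (size (rden P Q))).-1.

Definition reval (P Q : {poly C}) (z : sphere) : sphere :=
  let P1 := rnum P Q in let Q1 := rden P Q in
  match z with
  | Some z0 => if Q1.[z0] == 0 then None else Some (P1.[z0] / Q1.[z0])
  | None =>
      if (size Q1 < size P1)%N then None
      else if (size P1 < size Q1)%N then Some 0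
      else Some (lead_coef P1 / lead_coef Q1)
  end.

Definition rderiv (P Q : {poly C}) (z0 : C) : C :=
  let P1 := rnum P Q in let Q1 := rden P Q in
  (P1^`() * Q1 - P1 * Q1^`()).[z0] / (Q1.[z0]) ^+ 2.

(* X^n p(1/X) *)
Definition recip (n : nat) (p : {poly C}) : {poly C} :=
  \poly_(i < n.+1) p`_(n - i).

(* Multiplier of P/Q at a fixed point z: the derivative at z in the standard
   chart; at oo one uses the chart w = 1/z, in which P1/Q1 (of degree d)
   becomes  w |-> 1/(P1/Q1)(1/w) = (w^d Q1(1/w)) / (w^d P1(1/w)). *)
Definition multiplier (P Q : {poly C}) (z : sphere) : C :=
  match z with
  | Some z0 => rderiv P Q z0
  | None =>
      let P1 := rnum P Q in let Q1 := rden P Q in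
      let d := (maxn (size P1) (size Q1)).-1 in
      rderiv (recip d Q1) (recip d P1) 0
  end.

(* Residue fixed point index at a fixed point with multiplier <> 1:
   iota(R, z0) = 1/(1 - lambda) (the value of the residue integral
   (1/2 pi i) \oint dz/(z - R z) in that case). *)
Definition residue_index (P Q : {poly C}) (z : sphere) : C :=
  (1 - multiplier P Q z)^-1.

Definition is_fixed (P Q : {poly C}) (z : sphere) : Prop := reval P Q z = z.

Definition mobius (a b c d : C) : sphere -> sphere :=
  reval (a *: 'X + b%:P) (c *: 'X + d%:P).

(* Newton-like map N_{h,p}(z) = z - h p(z)/p'(z) = (z p' - h p)/p' *)
Definition newton_num (h : C) (p : {poly C}) : {poly C} := 'X * p^`() - h *: p.
Definition newton_den (p : {poly C}) : {poly C} := p^`().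

Definition mob_conjugate (F G : sphere -> sphere) : Prop :=
  exists a b c d : C, a * d - b * c != 0 /\
    forall z : sphere, F (mobius a b c d z) = mobius a b c d (G z).

End RatMap.

(* Main.v *)
Require Import Defs.
From HB Require Import structures.
From mathcomp Require Import all_boot all_order all_algebra.
From mathcomp Require Import complex.
From mathcomp Require Import Rstruct.
From mathcomp Require Import ring.
Import Order.TTheory GRing.Theory Num.Theory ComplexField.
Local Open Scope ring_scope.


Definition to_sph (x y : CC) : option CC := if y == 0 then None else Some (x / y).
Definition pt (z : option CC) : CC * CC := if z is Some z0 then (z0, 1) else (1, 0).
Definition homp (n : nat) (A : {poly CC}) (x y : CC) :=
  \sum_(i < n.+1) A`_i * x ^+ i * y ^+ (n - i).

Lemma homp_some n (A : {poly CC}) z0 : (size A <= n.+1)%N -> homp n A z0 1 = A.[z0].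
Proof.
move=> hs; rewrite /homp (horner_coef_wide _ hs); apply: eq_bigr => i _.
by rewrite expr1n mulr1.
Qed.

Lemma homp_none n (A : {poly CC}) : homp n A 1 0 = A`_n.
Proof.
rewrite /homp big_ord_recr /= subnn expr0 expr1n !mulr1 big1 ?add0r // => i _.
by rewrite expr0n subn_eq0 leqNgt ltn_ord /= mulr0.
Qed.

Lemma homp_scale n (A : {poly CC}) c x y :
  homp n A (c * x) (c * y) = c ^+ n * homp n A x y.
Proof.
rewrite /homp mulr_sumr; apply: eq_bigr => i _.
rewrite !exprMn.
have -> : c ^+ n = c ^+ i * c ^+ (n - i) by rewrite -exprD subnKC // -ltnS.
ring.
Qed.

Lemma rden_neq0 (P Q : {poly CC}) : Q != 0 -> rden P Q != 0.
Proof.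
move=> hQ; apply: contra hQ => /eqP h.
by rewrite -(divpK (dvdp_gcdr P Q)) -/(rden P Q) h mul0r.
Qed.

Lemma rnum_mul (P Q : {poly CC}) : P = rnum P Q * gcdp P Q.
Proof. by rewrite /rnum divpK // dvdp_gcdl. Qed.
Lemma rden_mul (P Q : {poly CC}) : Q = rden P Q * gcdp P Q.
Proof. by rewrite /rden divpK // dvdp_gcdr. Qed.

Definition Hm1 P Q x y := homp (rdeg P Q) (rnum P Q) x y.
Definition Hm2 P Q x y := homp (rdeg P Q) (rden P Q) x y.

Lemma reval_pt (P Q : {poly CC}) z : Q != 0 ->
  reval P Q z = to_sph (Hm1 P Q (pt z).1 (pt z).2) (Hm2 P Q (pt z).1 (pt z).2).
Proof.
move=> hQ; have hB := @rden_neq0 P Q hQ.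
rewrite /reval /Hm1 /Hm2 /rdeg.
set A := rnum P Q; set B := rden P Q.
have hsA : (size A <= (maxn (size A) (size B)).-1.+1)%N.
  by apply: leq_trans (leq_maxl _ _) (leqSpred _).
have hsB : (size B <= (maxn (size A) (size B)).-1.+1)%N.
  by apply: leq_trans (leq_maxr _ _) (leqSpred _).
case: z => [z0|] /=.
  by rewrite !homp_some.
rewrite !homp_none /to_sph.
have sB : (0 < size B)%N by rewrite size_poly_gt0.
case: ltngtP => h.
- by rewrite nth_default ?eqxx // -ltnS prednK // (leq_ltn_trans _ h).
- rewrite -/(lead_coef B) lead_coef_eq0 (negbTE hB).
  by rewrite nth_default ?mul0r // -ltnS prednK.
- by rewrite -/(lead_coef B) lead_coef_eq0 (negbTE hB) h -/(lead_coef A).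
Qed.

Lemma to_sph_scale c x y : c != 0 -> to_sph (c * x) (c * y) = to_sph x y.
Proof.
move=> hc; rewrite /to_sph mulf_eq0 (negbTE hc) /=; case: eqP => // /eqP hy.
by congr Some; field; apply/andP.
Qed.

Lemma pt_to_sph x y : (x != 0) || (y != 0) ->
  exists2 c, c != 0 & x = c * (pt (to_sph x y)).1 /\ y = c * (pt (to_sph x y)).2.
Proof.
rewrite /to_sph; case: (eqVneq y 0) => [->|hy] /= hx.
  by rewrite orbF in hx; exists x; rewrite // mulr1 mulr0.
by exists y => //; rewrite mulr1 mulrC divfK.
Qed.

Lemma reval_to_sph (P Q : {poly CC}) x y : Q != 0 -> (x != 0) || (y != 0) ->
  reval P Q (to_sph x y) = to_sph (Hm1 P Q x y) (Hm2 P Q x y).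
Proof.
move=> hQ hxy; have [c hc] := @pt_to_sph x y hxy.
rewrite reval_pt //; move: (pt (to_sph x y)) => [w1 w2] /= [-> ->].
by rewrite /Hm1 /Hm2 !homp_scale to_sph_scale // expf_neq0.
Qed.

Lemma rderiv_aux (u v g : {poly CC}) z0 : (v * g).[z0] != 0 ->
  ((u * g)^`() * (v * g) - (u * g) * (v * g)^`()).[z0] / ((v * g).[z0]) ^+ 2 =
  ((u^`() * v - u * v^`()).[z0]) / (v.[z0]) ^+ 2.
Proof.
rewrite !derivM !(hornerM, hornerD, hornerN) mulf_eq0 negb_or => /andP [hv hg].
by field; apply/andP.
Qed.

Lemma rderiv_eq (P Q : {poly CC}) z0 : Q.[z0] != 0 ->
  rderiv P Q z0 = ((P^`() * Q - P * Q^`()).[z0]) / (Q.[z0]) ^+ 2.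
Proof.
move=> hQ; have := @rderiv_aux (rnum P Q) (rden P Q) (gcdp P Q) z0.
rewrite -rnum_mul -rden_mul => ->; by [].
Qed.

Lemma rnum_coprime (A B W : {poly CC}) : coprimep A B -> W != 0 ->
  exists2 c, c != 0 & rnum (A * W) (B * W) = c *: A /\ rden (A * W) (B * W) = c *: B.
Proof.
move=> hAB hW.
have h : gcdp (A * W) (B * W) %= W.
  apply: eqp_trans (gcdp_mul2r A B W) _.
  by rewrite -{2}[W]mul1r eqp_mul2r // gcdp_eqp1.
case/eqpP: h => [[c1 c2]] /= /andP [h1 h2] e.
have eg : gcdp (A * W) (B * W) = (c2 / c1) *: W.
  by rewrite (mulrC c2) -scalerA -e scalerA mulVf // scale1r.
have hc : c2 / c1 != 0 by rewrite mulf_neq0 // invr_eq0.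
exists (c2 / c1)^-1; first by rewrite invr_eq0.
by rewrite /rnum /rden eg !divpZr // !mulpK.
Qed.

Lemma horner3 (A : {poly CC}) t : (size A <= 3)%N ->
  A.[t] = A`_0 + A`_1 * t + A`_2 * t ^+ 2.
Proof.
move=> hs; rewrite (horner_coef_wide _ hs) !big_ord_recr big_ord0 /=.
by rewrite add0r expr0 mulr1 expr1.
Qed.

Lemma size_deriv_le (A : {poly CC}) : (size A^`() <= size A)%N.
Proof.
have [->|hA] := eqVneq A 0; first by rewrite deriv0.
exact: ltnW (lt_size_deriv hA).
Qed.

Lemma hornerD3 (A : {poly CC}) t : (size A <= 3)%N ->
  A^`().[t] = A`_1 + A`_2 *+ 2 * t.
Proof.
move=> hs; rewrite horner3; last exact: leq_trans (size_deriv_le A) hs.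
rewrite !coef_deriv (nth_default 0 (_ : size A <= 3)%N) // mul0rn mul0r addr0.
by rewrite mulr1n.
Qed.

Lemma homp_scaleZ n c (A : {poly CC}) x y : homp n (c *: A) x y = c * homp n A x y.
Proof. by rewrite /homp mulr_sumr; apply: eq_bigr => i _; rewrite coefZ !mulrA. Qed.

Lemma homp2E (A : {poly CC}) x y :
  homp 2 A x y = A`_0 * y ^+ 2 + A`_1 * x * y + A`_2 * x ^+ 2.
Proof. by rewrite /homp !big_ord_recr big_ord0 /= add0r !expr0 !mulr1 expr1. Qed.

Lemma homp1E (A : {poly CC}) x y : homp 1 A x y = A`_0 * y + A`_1 * x.
Proof. by rewrite /homp !big_ord_recr big_ord0 /= add0r !expr0 !mulr1 expr1. Qed.

Lemma size_rnum_le (P Q : {poly CC}) : (size (rnum P Q) <= (rdeg P Q).+1)%N.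
Proof. by rewrite /rdeg; apply: leq_trans (leq_maxl _ _) (leqSpred _). Qed.
Lemma size_rden_le (P Q : {poly CC}) : (size (rden P Q) <= (rdeg P Q).+1)%N.
Proof. by rewrite /rdeg; apply: leq_trans (leq_maxr _ _) (leqSpred _). Qed.

Lemma homp_x0 n (A : {poly CC}) x : homp n A x 0 = x ^+ n * A`_n.
Proof.
have -> : homp n A x 0 = homp n A (x * 1) (x * 0) by rewrite mulr1 mulr0.
by rewrite homp_scale homp_none.
Qed.

Lemma homp_xy n (A : {poly CC}) x y : y != 0 -> (size A <= n.+1)%N ->
  homp n A x y = y ^+ n * A.[x / y].
Proof.
move=> hy hs; rewrite -(@homp_some n A (x / y) hs) -homp_scale mulr1.
by rewrite mulrC divfK.
Qed.

Lemma Hm_nondeg (P Q : {poly CC}) x y : Q != 0 -> (x != 0) || (y != 0) ->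
  (Hm1 P Q x y != 0) || (Hm2 P Q x y != 0).
Proof.
move=> hQ hxy; have hB := @rden_neq0 P Q hQ.
have cop : coprimep (rnum P Q) (rden P Q) by apply: coprimep_div_gcd; rewrite hQ orbT.
have [ey|hy] := eqVneq y 0.
  rewrite ey eqxx orbF in hxy; rewrite ey.
  rewrite /Hm1 /Hm2 !homp_x0.
  rewrite !mulf_eq0 !negb_or !expf_eq0 (negbTE hxy) !andbF /=.
  have [h|h] := leqP (size (rnum P Q)) (size (rden P Q)).
    apply/orP; right; rewrite /rdeg (maxn_idPr h) -/(lead_coef _).
    by rewrite lead_coef_eq0.
  apply/orP; left; rewrite /rdeg (maxn_idPl (ltnW h)) -/(lead_coef _).
  by rewrite lead_coef_eq0 -size_poly_gt0 (leq_ltn_trans _ h).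
rewrite /Hm1 /Hm2 !homp_xy ?size_rnum_le ?size_rden_le //.
rewrite !mulf_eq0 !negb_or !expf_eq0 (negbTE hy) !andbF /=.
rewrite -negb_and; apply/negP => /andP [h1 h2].
case/Bezout_eq1_coprimepP: cop => [[u v]] /= /(congr1 (fun p => p.[x / y])).
by rewrite !hornerE (eqP h1) (eqP h2) !mulr0 addr0 => /eqP; rewrite eq_sym oner_eq0.
Qed.

Lemma fixed_mu (P Q : {poly CC}) z : Q != 0 -> is_fixed P Q z ->
  exists2 mu, mu != 0 &
   Hm1 P Q (pt z).1 (pt z).2 = mu * (pt z).1 /\ Hm2 P Q (pt z).1 (pt z).2 = mu * (pt z).2.
Proof.
move=> hQ; rewrite /is_fixed reval_pt // => hz.
have hpt : ((pt z).1 != 0) || ((pt z).2 != 0).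
  by case: z hz => [z0|] _ /=; rewrite oner_eq0 ?orbT.
have hnd := @Hm_nondeg P Q _ _ hQ hpt.
have [c hc] := @pt_to_sph _ _ hnd; rewrite hz => -[e1 e2].
by exists c.
Qed.

Definition JacS (a0 a1 a2 b0 b1 b2 x y : CC) :=
  (2 * a2 * x + a1 * y) * (b1 * x + 2 * b0 * y) -
  (a1 * x + 2 * a0 * y) * (2 * b2 * x + b1 * y).

Lemma multiplier_J (P Q : {poly CC}) z mu : Q != 0 -> rdeg P Q = 2%N -> mu != 0 ->
  Hm1 P Q (pt z).1 (pt z).2 = mu * (pt z).1 -> Hm2 P Q (pt z).1 (pt z).2 = mu * (pt z).2 ->
  multiplier P Q z =
  JacS (rnum P Q)`_0 (rnum P Q)`_1 (rnum P Q)`_2 (rden P Q)`_0 (rden P Q)`_1 (rden P Q)`_2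
    (pt z).1 (pt z).2 / (2 * mu ^+ 2).
Proof.
move=> hQ hd hmu; rewrite /Hm1 /Hm2 hd !homp2E => e1 e2.
set A := rnum P Q in e1 e2 *; set B := rden P Q in e1 e2 *.
have sA : (size A <= 3)%N by have := size_rnum_le P Q; rewrite hd.
have sB : (size B <= 3)%N by have := size_rden_le P Q; rewrite hd.
case: z e1 e2 => [z0|] /= e1 e2.
  rewrite /rderiv -/A -/B !(hornerM, hornerD, hornerN) !hornerD3 // !horner3 //.
  rewrite /JacS; move: e1 e2; rewrite !expr1n !mulr1 => e1 e2.
  rewrite -e2 in hmu *.
  by field.
rewrite -/(rdeg P Q) hd -/A -/B.
move: e1 e2; rewrite !expr0n /= !mulr0 ?mul0r !add0r !expr1n !mulr1 => e1 e2.
have hA0 : (recip 2 A).[0] = A`_2 by rewrite horner_coef0 /recip coef_poly.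
rewrite rderiv_eq; last by rewrite hA0 e1.
rewrite !(hornerM, hornerN, hornerD) !horner_coef0 !coef_deriv /recip !coef_poly /=.
rewrite /JacS e1 e2 (_ : (2 - 1 = 1)%N) // !mulr1n; by field.
Qed.


Lemma alg_b (g0 g1 g2 e0 e1 e2 n1 n2 K Mm h : CC) :
  n1 != 0 -> n2 != 0 -> h != 0 -> K != 0 -> Mm != 0 ->
  e2 = 0 -> g2 + g1 + g0 = n1 -> e2 + e1 + e0 = n1 ->
  g2 - g1 + g0 = - n2 -> e2 - e1 + e0 = n2 ->
  (1 - JacS g0 g1 g2 e0 e1 e2 1 1 / (2 * n1 ^+ 2))^-1 = K / h ->
  (1 - JacS g0 g1 g2 e0 e1 e2 (-1) 1 / (2 * n2 ^+ 2))^-1 = Mm / h ->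
  exists2 k, k != 0 &
    (g0 = k * h /\ g1 = k * (K - Mm) /\ g2 = k * (K + Mm - h) /\
        e0 = k * (K - Mm) /\ e1 = k * (K + Mm) /\ e2 = 0).
Proof.
move=> hn1 hn2 hh hK hM he2 h1 h2 h3 h4.
have eg1 : g1 = (n1 + n2) / 2 by rewrite -h1 -[n2]opprK -h3; field.
have eg2 : g2 = (n1 - n2) / 2 - g0 by rewrite -h1 -[n2]opprK -h3; field.
have ee1 : e1 = (n1 - n2) / 2 by rewrite -h2 -h4 he2; field.
have ee0 : e0 = (n1 + n2) / 2 by rewrite -h2 -h4 he2; field.
rewrite he2 eg1 eg2 ee1 ee0 => l1 l2.
have E1 : 1 - JacS g0 ((n1 + n2) / 2) ((n1 - n2) / 2 - g0) ((n1 + n2) / 2)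
    ((n1 - n2) / 2) 0 1 1 / (2 * n1 ^+ 2) = 2 * g0 / n1.
  by rewrite /JacS; field.
have E2 : 1 - JacS g0 ((n1 + n2) / 2) ((n1 - n2) / 2 - g0) ((n1 + n2) / 2)
    ((n1 - n2) / 2) 0 (-1) 1 / (2 * n2 ^+ 2) = - (2 * g0) / n2.
  by rewrite /JacS; field.
rewrite E1 invf_div in l1; rewrite E2 invf_div in l2.
have hg0 : g0 != 0.
  apply/eqP => eg; move: l1; rewrite eg mulr0 invr0 mulr0 => /esym /eqP.
  by rewrite mulf_eq0 invr_eq0 (negbTE hK) (negbTE hh).
have en1 : n1 = 2 * g0 * (K / h) by rewrite -l1; field.
have en2 : n2 = - (2 * g0) * (Mm / h) by rewrite -l2; field.
exists (g0 / h); first by rewrite mulf_neq0 // invr_eq0.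
by rewrite ?eg1 ?eg2 ?ee1 ?ee0 en1 en2; do !split; field.
Qed.

Definition qf (c0 c1 c2 x y : CC) := c0 * y ^+ 2 + c1 * x * y + c2 * x ^+ 2.

Section Conj.
Variables a0 a1 a2 b0 b1 b2 a b c d : CC.
Definition G1 x y := d * qf a0 a1 a2 (a * x + b * y) (c * x + d * y)
                   - b * qf b0 b1 b2 (a * x + b * y) (c * x + d * y).
Definition G2 x y := - c * qf a0 a1 a2 (a * x + b * y) (c * x + d * y)
                   + a * qf b0 b1 b2 (a * x + b * y) (c * x + d * y).
Definition JG x y := JacS (G1 0 1) (G1 1 1 - G1 1 0 - G1 0 1) (G1 1 0)
                          (G2 0 1) (G2 1 1 - G2 1 0 - G2 0 1) (G2 1 0) x y.

Lemma G1E x y : G1 x y = G1 0 1 * y ^+ 2 + (G1 1 1 - G1 1 0 - G1 0 1) * x * y + G1 1 0 * x ^+ 2.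
Proof. rewrite /G1 /qf; ring. Qed.
Lemma G2E x y : G2 x y = G2 0 1 * y ^+ 2 + (G2 1 1 - G2 1 0 - G2 0 1) * x * y + G2 1 0 * x ^+ 2.
Proof. rewrite /G2 /qf; ring. Qed.
Lemma adjG1 x y : a * G1 x y + b * G2 x y = (a * d - b * c) * qf a0 a1 a2 (a * x + b * y) (c * x + d * y).
Proof. rewrite /G1 /G2; ring. Qed.
Lemma adjG2 x y : c * G1 x y + d * G2 x y = (a * d - b * c) * qf b0 b1 b2 (a * x + b * y) (c * x + d * y).
Proof. rewrite /G1 /G2; ring. Qed.
Lemma JG_inv x y : JG x y = (a * d - b * c) ^+ 2 * JacS a0 a1 a2 b0 b1 b2 (a * x + b * y) (c * x + d * y).
Proof. rewrite /JG /JacS /G1 /G2 /qf; ring. Qed.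
End Conj.

Lemma qf_scale c0 c1 c2 t x y : qf c0 c1 c2 (t * x) (t * y) = t ^+ 2 * qf c0 c1 c2 x y.
Proof. rewrite /qf; ring. Qed.
Lemma JacS_scale a0 a1 a2 b0 b1 b2 t x y :
  JacS a0 a1 a2 b0 b1 b2 (t * x) (t * y) = t ^+ 2 * JacS a0 a1 a2 b0 b1 b2 x y.
Proof. rewrite /JacS; ring. Qed.

Lemma core_alg (a0 a1 a2 b0 b1 b2 x1 y1 x2 y2 x3 y3 mu1 mu2 mu3 K Mm h : CC) :
  qf a0 a1 a2 x1 y1 = mu1 * x1 -> qf b0 b1 b2 x1 y1 = mu1 * y1 ->
  qf a0 a1 a2 x2 y2 = mu2 * x2 -> qf b0 b1 b2 x2 y2 = mu2 * y2 ->
  qf a0 a1 a2 x3 y3 = mu3 * x3 -> qf b0 b1 b2 x3 y3 = mu3 * y3 ->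
  mu1 != 0 -> mu2 != 0 -> mu3 != 0 ->
  x1 * y2 - y1 * x2 != 0 -> x1 * y3 - y1 * x3 != 0 -> x2 * y3 - y2 * x3 != 0 ->
  h != 0 -> K != 0 -> Mm != 0 ->
  (1 - JacS a0 a1 a2 b0 b1 b2 x1 y1 / (2 * mu1 ^+ 2))^-1 = K / h ->
  (1 - JacS a0 a1 a2 b0 b1 b2 x2 y2 / (2 * mu2 ^+ 2))^-1 = Mm / h ->
  forall al be a b c d, al = - (x1 * y2 - y1 * x2) / 2 -> be = x2 * y3 - y2 * x3 ->
  a = al * x3 -> c = al * y3 -> b = be * x1 - al * x3 -> d = be * y1 - al * y3 ->
  a * d - b * c != 0 /\ K + Mm - h != 0 /\
  exists2 k, k != 0 & forall x y,
    qf a0 a1 a2 (a * x + b * y) (c * x + d * y) =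
      k * (a * qf h (K - Mm) (K + Mm - h) x y + b * qf (K - Mm) (K + Mm) 0 x y) /\
    qf b0 b1 b2 (a * x + b * y) (c * x + d * y) =
      k * (c * qf h (K - Mm) (K + Mm - h) x y + d * qf (K - Mm) (K + Mm) 0 x y).
Proof.
move=> hA1 hB1 hA2 hB2 hA3 hB3 hm1 hm2 hm3 hD12 hD13 hD23 hh hK hM l1 l2.
move=> al be a b c d eal ebe ea ec eb ed.
have hal : al != 0.
  rewrite eal mulf_neq0 //; last by rewrite invr_eq0 pnatr_eq0.
  by rewrite oppr_eq0.
have hbe : be != 0 by rewrite ebe.
have edet : a * d - b * c = al * be * (x3 * y1 - x1 * y3).
  by rewrite ea eb ec ed; ring.
have hdet : a * d - b * c != 0.
  rewrite edet !mulf_neq0 //; apply: contra hD13 => /eqP e.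
  have -> : x1 * y3 - y1 * x3 = - (x3 * y1 - x1 * y3) by ring.
  by rewrite e oppr0.
have M10 : G1 a0 a1 a2 b0 b1 b2 a b c d 1 0 = al ^+ 2 * mu3 * (d * x3 - b * y3) /\
           G2 a0 a1 a2 b0 b1 b2 a b c d 1 0 = 0.
  have E1 : G1 a0 a1 a2 b0 b1 b2 a b c d 1 0 =
            al ^+ 2 * (d * qf a0 a1 a2 x3 y3 - b * qf b0 b1 b2 x3 y3).
    rewrite /G1 (_ : a * 1 + b * 0 = al * x3) ?ea; last by ring.
    rewrite (_ : c * 1 + d * 0 = al * y3) ?ec; last by ring.
    rewrite !qf_scale; ring.
  have E2 : G2 a0 a1 a2 b0 b1 b2 a b c d 1 0 =
            al ^+ 2 * (- c * qf a0 a1 a2 x3 y3 + a * qf b0 b1 b2 x3 y3).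
    rewrite /G2 (_ : a * 1 + b * 0 = al * x3) ?ea; last by ring.
    rewrite (_ : c * 1 + d * 0 = al * y3) ?ec; last by ring.
    rewrite !qf_scale; ring.
  rewrite E1 E2 hA3 hB3; split; first by ring.
  by rewrite ea ec; ring.
set GG1 := G1 a0 a1 a2 b0 b1 b2 a b c d; set GG2 := G2 a0 a1 a2 b0 b1 b2 a b c d.
pose n1 := be ^+ 2 * mu1 * (d * x1 - b * y1).
have M11 : GG1 1 1 = n1 /\ GG2 1 1 = n1.
  have E1 : GG1 1 1 = be ^+ 2 * (d * qf a0 a1 a2 x1 y1 - b * qf b0 b1 b2 x1 y1).
    rewrite /GG1 /G1 (_ : a * 1 + b * 1 = be * x1); last by rewrite ea eb; ring.
    rewrite (_ : c * 1 + d * 1 = be * y1); last by rewrite ec ed; ring.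
    rewrite !qf_scale; ring.
  have E2 : GG2 1 1 = be ^+ 2 * (- c * qf a0 a1 a2 x1 y1 + a * qf b0 b1 b2 x1 y1).
    rewrite /GG2 /G2 (_ : a * 1 + b * 1 = be * x1); last by rewrite ea eb; ring.
    rewrite (_ : c * 1 + d * 1 = be * y1); last by rewrite ec ed; ring.
    rewrite !qf_scale; ring.
  rewrite E1 E2 hA1 hB1 /n1; split; first by ring.
  by rewrite ea eb ec ed; ring.
pose D13 := x1 * y3 - y1 * x3.
pose n2 := D13 ^+ 2 * mu2 * (- c * x2 + a * y2).
have Mm11 : GG1 (-1) 1 = - n2 /\ GG2 (-1) 1 = n2.
  have e1 : a * -1 + b * 1 = D13 * x2 by rewrite /D13 eb ea eal ebe; field.
  have e2 : c * -1 + d * 1 = D13 * y2 by rewrite /D13 ed ec eal ebe; field.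
  have E1 : GG1 (-1) 1 = D13 ^+ 2 * (d * qf a0 a1 a2 x2 y2 - b * qf b0 b1 b2 x2 y2).
    by rewrite /GG1 /G1 e1 e2 !qf_scale; ring.
  have E2 : GG2 (-1) 1 = D13 ^+ 2 * (- c * qf a0 a1 a2 x2 y2 + a * qf b0 b1 b2 x2 y2).
    by rewrite /GG2 /G2 e1 e2 !qf_scale; ring.
  rewrite E1 E2 hA2 hB2 /n2; split; last by ring.
  by rewrite ea eb ec ed eal ebe; field.
have hn1 : n1 != 0.
  rewrite /n1 !mulf_neq0 ?expf_neq0 //.
  rewrite (_ : d * x1 - b * y1 = - al * D13); last by rewrite /D13 ed eb; ring.
  by rewrite mulf_neq0 ?oppr_eq0.
have hD13' : D13 != 0 by [].
have hn2 : n2 != 0.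
  rewrite /n2 !mulf_neq0 ?expf_neq0 //.
  rewrite (_ : - c * x2 + a * y2 = - al * be); last by rewrite ebe ec ea; ring.
  by rewrite mulf_neq0 ?oppr_eq0.
have J1 : JacS a0 a1 a2 b0 b1 b2 x1 y1 / (2 * mu1 ^+ 2) =
          JG a0 a1 a2 b0 b1 b2 a b c d 1 1 / (2 * n1 ^+ 2).
  rewrite JG_inv (_ : a * 1 + b * 1 = be * x1); last by rewrite ea eb; ring.
  rewrite (_ : c * 1 + d * 1 = be * y1); last by rewrite ec ed; ring.
  rewrite JacS_scale (_ : n1 = be * mu1 * (a * d - b * c)); last first.
    by rewrite /n1 edet ed eb; ring.
  by field; rewrite hm1 hbe hdet.
have J2 : JacS a0 a1 a2 b0 b1 b2 x2 y2 / (2 * mu2 ^+ 2) =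
          JG a0 a1 a2 b0 b1 b2 a b c d (-1) 1 / (2 * n2 ^+ 2).
  rewrite JG_inv (_ : a * -1 + b * 1 = D13 * x2); last first.
    by rewrite /D13 eb ea eal ebe; field.
  rewrite (_ : c * -1 + d * 1 = D13 * y2); last first.
    by rewrite /D13 ed ec eal ebe; field.
  rewrite JacS_scale (_ : n2 = D13 * mu2 * (a * d - b * c)); last first.
    by rewrite /n2 edet ec ea ebe /D13; ring.
  by field; rewrite hm2 hD13' hdet.
have H1 : GG1 1 0 + (GG1 1 1 - GG1 1 0 - GG1 0 1) + GG1 0 1 = n1.
  by rewrite -(proj1 M11); ring.
have H2 : GG2 1 0 + (GG2 1 1 - GG2 1 0 - GG2 0 1) + GG2 0 1 = n1.
  by rewrite -(proj2 M11); ring.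
have H3 : GG1 1 0 - (GG1 1 1 - GG1 1 0 - GG1 0 1) + GG1 0 1 = - n2.
  rewrite -(proj1 Mm11).
  have := G1E a0 a1 a2 b0 b1 b2 a b c d (-1) 1; rewrite -/GG1 => ->; ring.
have H4 : GG2 1 0 - (GG2 1 1 - GG2 1 0 - GG2 0 1) + GG2 0 1 = n2.
  rewrite -(proj2 Mm11).
  have := G2E a0 a1 a2 b0 b1 b2 a b c d (-1) 1; rewrite -/GG2 => ->; ring.
rewrite J1 in l1; rewrite J2 in l2.
have [k hk [eg0 [eg1 [eg2 [ee0 [ee1 ee2]]]]]] :=
  alg_b _ _ _ _ _ _ _ _ _ _ _ hn1 hn2 hh hK hM (proj2 M10) H1 H2 H3 H4 l1 l2.
split => //; split.
  have : GG1 1 0 != 0.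
    rewrite /GG1 (proj1 M10) !mulf_neq0 ?expf_neq0 //.
    rewrite (_ : d * x3 - b * y3 = - be * D13); last by rewrite /D13 ed eb; ring.
    by rewrite mulf_neq0 ?oppr_eq0.
  by rewrite eg2; apply: contra => /eqP ->; rewrite mulr0.
exists (k / (a * d - b * c)); first by rewrite mulf_neq0 ?invr_eq0.
move=> x y.
have A1 := adjG1 a0 a1 a2 b0 b1 b2 a b c d x y.
have A2 := adjG2 a0 a1 a2 b0 b1 b2 a b c d x y.
rewrite G1E G2E -/GG1 -/GG2 in A1 A2.
have ee2' : GG2 1 0 = 0 by exact: ee2.
rewrite eg1 ee1 eg0 eg2 ee0 ee2' in A1 A2.
split.
  apply: (mulfI hdet); rewrite -A1 /qf; field; exact: hdet.
apply: (mulfI hdet); rewrite -A2 /qf; field; exact: hdet.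
Qed.


Section Newton.
Variables (k m : nat) (h : CC).
Definition Vp : {poly CC} := ('X + 1) *+ k + ('X - 1) *+ m.
Definition Up : {poly CC} := 'X * Vp - h%:P * ('X ^+ 2 - 1).

Lemma coefV j : Vp`_j = if j == 0%N then k%:R - m%:R else if j == 1%N then k%:R + m%:R else 0.
Proof.
rewrite /Vp !coefE; case: j => [|[|j]] /=.
- by ring.
- by ring.
- by ring.
Qed.

Lemma coefU j : Up`_j = if j == 0%N then h else if j == 1%N then k%:R - m%:R
  else if j == 2%N then k%:R + m%:R - h else 0.
Proof.
rewrite /Up !coefE; case: j => [|[|[|j]]] /=; rewrite ?coefV /=; ring.
Qed.

Definition Wp : {poly CC} := ('X - 1) ^+ k.-1 * ('X + 1) ^+ m.-1.
Definition pp : {poly CC} := ('X - 1) ^+ k * ('X + 1) ^+ m.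

Lemma newton_fact : (0 < k)%N -> (0 < m)%N ->
  newton_den pp = Vp * Wp /\ newton_num h pp = Up * Wp.
Proof.
move=> hk hm.
have ek : ('X - 1 : {poly CC}) ^+ k = ('X - 1) * ('X - 1) ^+ k.-1 by rewrite -exprS prednK.
have em : ('X + 1 : {poly CC}) ^+ m = ('X + 1) * ('X + 1) ^+ m.-1 by rewrite -exprS prednK.
have dd : newton_den pp = Vp * Wp.
  rewrite /newton_den /pp /Vp /Wp derivM !deriv_exp !derivE ek em; ring.
split => //; rewrite /newton_num -/(newton_den pp) dd /Up /pp /Wp ek em.
rewrite -mul_polyC; ring.
Qed.
End Newton.

Lemma coef_neq0_size (p : {poly CC}) i : p`_i != 0 -> (i < size p)%N.
Proof. by apply: contraR; rewrite -leqNgt => hs; rewrite nth_default. Qed.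

Definition NDf (u0 u1 u2 v0 v1 v2 : CC) := forall x y, (x != 0) || (y != 0) ->
  (qf u0 u1 u2 x y != 0) || (qf v0 v1 v2 x y != 0).

Lemma newton_Hm (k m : nat) (h : CC) : (0 < k)%N -> (0 < m)%N ->
  k%:R + m%:R - h != 0 ->
  NDf h (k%:R - m%:R) (k%:R + m%:R - h) (k%:R - m%:R) (k%:R + m%:R) 0 ->
  exists2 c, c != 0 & newton_den (pp k m) != 0 /\
    rdeg (newton_num h (pp k m)) (newton_den (pp k m)) = 2%N /\
    forall x y, Hm1 (newton_num h (pp k m)) (newton_den (pp k m)) x y =
                  c * qf h (k%:R - m%:R) (k%:R + m%:R - h) x y /\
                Hm2 (newton_num h (pp k m)) (newton_den (pp k m)) x y =
                  c * qf (k%:R - m%:R) (k%:R + m%:R) 0 x y.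
Proof.
move=> hk hm h2 nd.
have [ed en] := @newton_fact k m h hk hm.
have sU : (size (Up k m h) <= 3)%N.
  by apply/leq_sizeP => j hj; rewrite coefU; case: j hj => [|[|[|j]]].
have sV : (size (Vp k m) <= 3)%N.
  by apply/leq_sizeP => j hj; rewrite coefV; case: j hj => [|[|[|j]]].
have sU3 : size (Up k m h) = 3%N.
  apply/eqP; rewrite eqn_leq sU /=; apply: coef_neq0_size.
  by rewrite coefU.
have hKM : (k%:R + m%:R : CC) != 0 by rewrite -natrD pnatr_eq0 addn_eq0 negb_and -!lt0n hk.
set z0 : CC := - (k%:R - m%:R) / (k%:R + m%:R).
have eV : Vp k m = (k%:R + m%:R) *: ('X - z0%:P).
  apply/polyP => i; rewrite coefV !coefE; case: i => [|[|i]] /=.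
  - by rewrite /z0; field.
  - by rewrite subr0 mulr1.
  - by rewrite subrr mulr0.
have cop : coprimep (Up k m h) (Vp k m).
  rewrite eV coprimepZr // coprimep_XsubC /root.
  have := nd z0 1; rewrite oner_eq0 orbT => /(_ isT).
  rewrite {2}/qf (_ : (k%:R - m%:R) * 1 ^+ 2 + (k%:R + m%:R) * z0 * 1 + 0 * z0 ^+ 2 = 0).
    by rewrite eqxx orbF -(@homp_some 2 _ _ sU) homp2E !coefU.
  by rewrite /z0; field.
have hW : Wp k m != 0.
  rewrite mulf_neq0 // expf_neq0 //.
    by rewrite -polyC1 -size_poly_gt0 size_XsubC.
  by rewrite -polyC1 -size_poly_gt0 size_XaddC.
have [c hc [er eq]] := @rnum_coprime _ _ _ cop hW.
exists c => //.
have hdeg : rdeg (newton_num h (pp k m)) (newton_den (pp k m)) = 2%N.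
  by rewrite /rdeg en ed er eq !size_scale // sU3 (maxn_idPl sV).
split.
  rewrite ed mulf_neq0 // eV scaler_eq0 negb_or hKM /=.
  by rewrite -size_poly_gt0 size_XsubC.
split => // x y.
by rewrite /Hm1 /Hm2 hdeg en ed er eq !homp_scaleZ !homp2E !coefU !coefV.
Qed.

Lemma mobius_Hm (a b c d : CC) : a * d - b * c != 0 ->
  exists2 c', c' != 0 & c *: 'X + d%:P != 0 /\
    forall x y, Hm1 (a *: 'X + b%:P) (c *: 'X + d%:P) x y = c' * (a * x + b * y) /\
                Hm2 (a *: 'X + b%:P) (c *: 'X + d%:P) x y = c' * (c * x + d * y).
Proof.
move=> hdet.
set La : {poly CC} := a *: 'X + b%:P; set Lc : {poly CC} := c *: 'X + d%:P.
have cLa j : La`_j = if j == 0%N then b else if j == 1%N then a else 0.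
  by rewrite /La !coefE; case: j => [|[|j]] /=; ring.
have cLc j : Lc`_j = if j == 0%N then d else if j == 1%N then c else 0.
  by rewrite /Lc !coefE; case: j => [|[|j]] /=; ring.
have cop : coprimep La Lc.
  apply/Bezout_eq1_coprimepP; exists ((- c / (a * d - b * c))%:P, (a / (a * d - b * c))%:P).
  apply/polyP => i; rewrite /= !coefE; case: i => [|[|i]] /=.
  - by field.
  - by field.
  - by field.
have := @rnum_coprime La Lc 1 cop (oner_neq0 _); rewrite !mulr1.
move=> [c' hc' [er eq]]; exists c' => //; split.
  apply/negP => /eqP e0; move: hdet.
  have := cLc 0%N; have := cLc 1%N; rewrite e0 !coef0 /= => <- <-.
  by rewrite !mulr0 subrr eqxx.
move=> x y.
have sLa : (size La <= 2)%N by apply/leq_sizeP => j hj; rewrite cLa; case: j hj => [|[|j]].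
have sLc : (size Lc <= 2)%N by apply/leq_sizeP => j hj; rewrite cLc; case: j hj => [|[|j]].
have hdeg : rdeg La Lc = 1%N.
  rewrite /rdeg er eq !size_scale //.
  have [ha|ha] := eqVneq a 0.
    have hc : c != 0 by apply: contra hdet => /eqP ->; rewrite ha !mul0r mulr0 subrr.
    have : (1 < size Lc)%N by apply: coef_neq0_size; rewrite cLc.
    move=> h1; have e : size Lc = 2%N by apply/eqP; rewrite eqn_leq sLc h1.
    by rewrite e; rewrite (maxn_idPr (leq_trans sLa _)) // e.
  have : (1 < size La)%N by apply: coef_neq0_size; rewrite cLa.
  move=> h1; have e : size La = 2%N by apply/eqP; rewrite eqn_leq sLa h1.
  by rewrite e (maxn_idPl sLc).
by rewrite /Hm1 /Hm2 hdeg er eq !homp_scaleZ !homp1E !cLa !cLc /=; split; ring.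
Qed.


Arguments fixed_mu [P Q z].
Arguments multiplier_J [P Q z mu].
Arguments core_alg [a0 a1 a2 b0 b1 b2 x1 y1 x2 y2 x3 y3 mu1 mu2 mu3 K Mm h].
Arguments Hm_nondeg [P Q x y].
Arguments reval_to_sph [P Q x y].
Arguments reval_pt [P Q z].

Lemma HmR1 (P Q : {poly CC}) x y : rdeg P Q = 2%N ->
  Hm1 P Q x y = qf (rnum P Q)`_0 (rnum P Q)`_1 (rnum P Q)`_2 x y.
Proof. by move=> hd; rewrite /Hm1 hd homp2E. Qed.
Lemma HmR2 (P Q : {poly CC}) x y : rdeg P Q = 2%N ->
  Hm2 P Q x y = qf (rden P Q)`_0 (rden P Q)`_1 (rden P Q)`_2 x y.
Proof. by move=> hd; rewrite /Hm2 hd homp2E. Qed.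

Lemma pt_nz z : ((pt z).1 != 0) || ((pt z).2 != 0).
Proof. by case: z => [z0|] /=; rewrite oner_eq0 ?orbT. Qed.

Lemma to_sph_pt z : to_sph (pt z).1 (pt z).2 = z.
Proof. by case: z => [z0|]; rewrite /to_sph /= ?oner_eq0 ?divr1 ?eqxx. Qed.

Lemma pt_det z w : z <> w -> (pt z).1 * (pt w).2 - (pt z).2 * (pt w).1 != 0.
Proof.
case: z => [z0|]; case: w => [w0|] //= hzw.
- rewrite !mulr1 !mul1r subr_eq0; apply/eqP => e; apply: hzw; by rewrite e.
- by rewrite mulr0 mul1r sub0r oppr_eq0 oner_eq0.
- by rewrite mul1r mul0r subr0 oner_eq0.
Qed.

Lemma Mw_nz (a b c d x y : CC) : a * d - b * c != 0 -> (x != 0) || (y != 0) ->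
  (a * x + b * y != 0) || (c * x + d * y != 0).
Proof.
move=> hdet hxy; rewrite -negb_and; apply/negP => /andP [/eqP e1 /eqP e2].
have ex : (a * d - b * c) * x = d * (a * x + b * y) - b * (c * x + d * y) by ring.
have ey : (a * d - b * c) * y = a * (c * x + d * y) - c * (a * x + b * y) by ring.
rewrite e1 e2 !mulr0 subrr in ex ey.
have x0 : x = 0 by move/eqP: ex; rewrite mulf_eq0 (negbTE hdet) => /eqP.
have y0 : y = 0 by move/eqP: ey; rewrite mulf_eq0 (negbTE hdet) => /eqP.
by move: hxy; rewrite x0 y0 eqxx.
Qed.

Arguments pt_det [z w].
Arguments Mw_nz [a b c d x y].

Lemma core (P Q : {poly CC}) a1 a2 r (k m : nat) (h : CC) :
  Q != 0 -> rdeg P Q = 2%N -> is_fixed P Q a1 -> is_fixed P Q a2 -> is_fixed P Q r ->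
  a1 <> a2 -> a1 <> r -> a2 <> r -> (0 < k)%N -> (0 < m)%N -> h != 0 ->
  residue_index P Q a1 = k%:R / h -> residue_index P Q a2 = m%:R / h ->
  mob_conjugate (reval P Q) (reval (newton_num h (pp k m)) (newton_den (pp k m))).
Proof.
move=> hQ hd f1 f2 f3 d12 d13 d23 hk hm hh r1 r2.
have [mu1 hm1 [e11 e12]] := fixed_mu hQ f1.
have [mu2 hm2 [e21 e22]] := fixed_mu hQ f2.
have [mu3 hm3 [e31 e32]] := fixed_mu hQ f3.
rewrite /residue_index (multiplier_J hQ hd hm1 e11 e12) in r1.
rewrite /residue_index (multiplier_J hQ hd hm2 e21 e22) in r2.
rewrite !HmR1 // in e11 e21 e31; rewrite !HmR2 // in e12 e22 e32.
have hK : (k%:R : CC) != 0 by rewrite pnatr_eq0 -lt0n.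
have hM : (m%:R : CC) != 0 by rewrite pnatr_eq0 -lt0n.
pose al := - ((pt a1).1 * (pt a2).2 - (pt a1).2 * (pt a2).1) / 2.
pose be := (pt a2).1 * (pt r).2 - (pt a2).2 * (pt r).1.
pose a := al * (pt r).1; pose c := al * (pt r).2.
pose b := be * (pt a1).1 - al * (pt r).1; pose d := be * (pt a1).2 - al * (pt r).2.
have := core_alg e11 e12 e21 e22 e31 e32 hm1 hm2 hm3 (pt_det d12) (pt_det d13) (pt_det d23)
  hh hK hM r1 r2 al be a b c d erefl erefl erefl erefl erefl erefl.
move=> [hdet [hKMh [kap hkap hid]]].
have nd : NDf h (k%:R - m%:R) (k%:R + m%:R - h) (k%:R - m%:R) (k%:R + m%:R) 0.
  move=> x y hxy; rewrite -negb_and; apply/negP => /andP [/eqP u0 /eqP v0].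
  have := Hm_nondeg (P:=P) hQ (Mw_nz hdet hxy).
  rewrite HmR1 // HmR2 // (proj1 (hid x y)) (proj2 (hid x y)) u0 v0.
  by rewrite !mulr0 addr0 mulr0 eqxx.
have [cN hcN [hND [hdN hN]]] := @newton_Hm k m h hk hm hKMh nd.
have [cM hcM [hLc hM']] := @mobius_Hm a b c d hdet.
exists a, b, c, d; split => // z.
rewrite /mobius (reval_pt (P:=a *: 'X + b%:P) hLc) (proj1 (hM' _ _)) (proj2 (hM' _ _)) to_sph_scale //.
rewrite (reval_to_sph (P:=P) hQ (Mw_nz hdet (pt_nz z))) HmR1 // HmR2 //.
rewrite (proj1 (hid _ _)) (proj2 (hid _ _)) to_sph_scale //.
rewrite (reval_pt (P:=newton_num h (pp k m)) hND) (proj1 (hN _ _)) (proj2 (hN _ _)) to_sph_scale //.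
rewrite (reval_to_sph (P:=a *: 'X + b%:P) hLc (nd _ _ (pt_nz z))) (proj1 (hM' _ _)) (proj2 (hM' _ _)).
by rewrite to_sph_scale.
Qed.


Lemma ratio_aux (i1 i2 K M : CC) : i1 != 0 -> i2 != 0 -> K != 0 -> M != 0 ->
  i1 / i2 = K / M -> i2 = M / (K * i1^-1).
Proof.
move=> h1 h2 hK hM e.
have e' : i1 = K / M * i2 by rewrite -e divfK.
rewrite e'; field.
by rewrite hK hM h2.
Qed.

Lemma mult_ne1 (P Q : {poly CC}) z : `|multiplier P Q z| < 1 -> multiplier P Q z != 1.
Proof. by move=> h; apply/eqP => e; move: h; rewrite e normr1 ltxx. Qed.

Lemma res_ne0 (P Q : {poly CC}) z : `|multiplier P Q z| < 1 -> residue_index P Q z != 0.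
Proof. by move/mult_ne1 => h; rewrite /residue_index invr_eq0 subr_eq0 eq_sym. Qed.

Theorem mainTheorem8 (P Q : {poly CC}) (a1 a2 r : option CC) :
  Q != 0 -> rdeg P Q = 2%N ->
  is_fixed P Q a1 -> is_fixed P Q a2 -> is_fixed P Q r ->
  a1 <> a2 -> a1 <> r -> a2 <> r ->
  `|multiplier P Q a1| < 1 -> `|multiplier P Q a2| < 1 ->
  1 < `|multiplier P Q r| ->
  (* (i) *)
  (forall lam : CC, multiplier P Q a1 = lam -> multiplier P Q a2 = lam ->
     mob_conjugate (reval P Q)
       (reval (newton_num (1 - lam) ('X^2 - 1)) (newton_den ('X^2 - 1))))
  /\
  (* (ii) *)
  (forall m n : nat, (0 < m)%N -> (0 < n)%N ->
     multiplier P Q a1 = 0 -> multiplier P Q a2 = n%:R / m%:R ->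
     let p := ('X - 1) ^+ (m - n) * ('X + 1) ^+ m in
     mob_conjugate (reval P Q)
       (reval (newton_num (m%:R - n%:R) p) (newton_den p)))
  /\
  (* (iii) *)
  (forall k m : nat, (0 < m)%N ->
     residue_index P Q a1 / residue_index P Q a2 = k%:R / m%:R ->
     let p := ('X - 1) ^+ k * ('X + 1) ^+ m in
     exists h : CC, h != 0 /\
       mob_conjugate (reval P Q) (reval (newton_num h p) (newton_den p))).
Proof.
move=> hQ hd f1 f2 f3 d12 d13 d23 n1 n2 _.
have hc k m h := @core P Q a1 a2 r k m h hQ hd f1 f2 f3 d12 d13 d23.
split.
  move=> lam e1 e2.
  have hl : 1 - lam != 0 by rewrite subr_eq0 eq_sym -e1 mult_ne1.
  have -> : ('X^2 - 1 : {poly CC}) = pp 1 1 by rewrite /pp !expr1; ring.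
  apply: (hc 1%N 1%N (1 - lam)) => //.
    by rewrite /residue_index e1 div1r.
  by rewrite /residue_index e2 div1r.
split.
  move=> m n hm hn e1 e2 p.
  have hmR : (m%:R : CC) != 0 by rewrite pnatr_eq0 -lt0n.
  have hnm : (n < m)%N.
    move: n2; rewrite e2 ger0_norm ?divr_ge0 ?ler0n //.
    by rewrite ltr_pdivrMr ?ltr0n // mul1r ltr_nat.
  have hh : (m%:R - n%:R : CC) != 0.
    by rewrite -natrB ?(ltnW hnm) // pnatr_eq0 -lt0n subn_gt0.
  apply: (hc (m - n)%N m) => //.
  - by rewrite subn_gt0.
  - by rewrite /residue_index e1 subr0 invr1 natrB ?(ltnW hnm) // divff // -natrB ?(ltnW hnm).
  - rewrite /residue_index e2.
    have -> : 1 - n%:R / m%:R = (m%:R - n%:R) / (m%:R : CC) by field.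
    by rewrite invf_div.
move=> k m hm e p.
have i1 := @res_ne0 P Q a1 n1; have i2 := @res_ne0 P Q a2 n2.
have hmR : (m%:R : CC) != 0 by rewrite pnatr_eq0 -lt0n.
have hk : (0 < k)%N.
  move: (residue_index P Q a1) (residue_index P Q a2) i1 i2 e => x1 x2 j1 j2 e'.
  rewrite lt0n; apply/eqP => k0; move: e'; rewrite k0 mul0r => /eqP.
  by rewrite mulf_eq0 invr_eq0 (negbTE j1) (negbTE j2).
have hkR : (k%:R : CC) != 0 by rewrite pnatr_eq0 -lt0n.
set x1 := residue_index P Q a1 in i1 e *; set x2 := residue_index P Q a2 in i2 e *.
exists (k%:R * x1^-1).
have hh : k%:R * x1^-1 != 0.
  by apply: mulf_neq0 => //; move: i1; apply: contra => /eqP h0; rewrite -[x1]invrK h0 invr0.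
split => //.
apply: (hc k m) => //.
  rewrite -/x1; by field; rewrite hkR i1.
rewrite -/x2; exact: ratio_aux.
Qed.
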